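(* The universal $\mathfrak{gl}$-weight system $w_{\mathfrak{gl}}$ satisfies the generalized Vassiliev relations: its $\mathbb{C}$-linear extension to $\bigoplus_m\mathbb{C}[\mathbb{S}_m]$ vanishes on every one-hyper-arc element and every two-hyper-arc element. Equivalently, for every $N\ge1$, the linear extension of $w_{\mathfrak{gl}(N)}$ vanishes on all generalized Vassiliev elements.
   Context: For $N\ge1$, $E_{ij}$ ($1\le i,j\le N$) are the matrix units generating $\mathfrak{gl}(N)$, and for $\alpha\in\mathbb{S}_m$, $w_{\mathfrak{gl}(N)}(\alpha)=\sum_{i_1,\dots,i_m=1}^N E_{i_1i_{\alpha(1)}}E_{i_2i_{\alpha(2)}}\cdots E_{i_mi_{\alpha(m)}}\in ZU(\mathfrak{gl}(N))$ (it is central). Put $C_k^{(N)}=w_{\mathfrak{gl}(N)}((1,2,\dots,k))$. The universal $\mathfrak{gl}$-weight system is the (known to exist, and unique) function $w_{\mathfrak{gl}}:\bigsqcup_{m\ge0}\mathbb{S}_m\to\mathbb{C}[N,C_1,C_2,\dots]$ such that for every $N\ge1$ the specialization $N\mapsto N$, $C_k\mapsto C_k^{(N)}$ sends $w_{\mathfrak{gl}}(\alpha)$ to $w_{\mathfrak{gl}(N)}(\alpha)$; in particular $w_{\mathfrak{gl}}((1,\dots,m))=C_m$. Generalized Vassiliev elements: let $m\ge2$, $\gamma\in\mathbb{S}_{m-1}$, $q\in[m-1]\cup\{*\}$. For $t\in\{0,\dots,m-1\}$ let $\alpha_t\in\mathbb{S}_m$ be obtained by inserting a new point $x$ (free leg)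 into the line $1<\dots<m-1$ in the gap between $t$ and $t+1$, relabeling all points $1,\dots,m$ in order, letting the permutation act as $\gamma$ on old points except $q\mapsto x\mapsto\gamma(q)$ if $q\ne*$, and $x$ fixed if $q=*$. For a cycle $v$ of $\gamma$, $E(\gamma,q,v)=\sum_{j\in v}(\alpha_{j-1}-\alpha_j)$; one-hyper-arc if $q\ne*$, $q\in v$, two-hyper-arc otherwise. *)

(* Defs.v *)
From mathcomp Require Import all_boot all_order all_algebra all_fingroup all_field.
Set Implicit Arguments. Unset Strict Implicit. Unset Printing Implicit Defensive.
Import GRing.Theory.
Local Open Scope ring_scope.

(** Words in the generators E_ij (encoded as pairs (i,j) : 'I_N * 'I_N) span
    the free associative algebra T(gl(N)); a formal C-linear combination of
    words is a list of (coefficient, word) pairs, whose value is determined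
    by its coefficient function [coef].  U(gl(N)) = T(gl(N)) / I where I is
    the two-sided ideal generated by
      E_ij E_kl - E_kl E_ij - (delta_jk E_il - delta_li E_kj);
    I is spanned by the elements  a * r * b  with a, b words and r a generator. *)

Definition word (N : nat) := seq ('I_N * 'I_N).
Definition fcomb (N : nat) := seq (algC * word N).

Definition coef N (x : fcomb N) (u : word N) : algC :=
  \sum_(p <- x) (if p.2 == u then p.1 else 0).

Definition scale_comb N (c : algC) (x : fcomb N) : fcomb N :=
  [seq (c * p.1, p.2) | p <- x].

Definition rel_elem N (a b : word N) (i j k l : 'I_N) : fcomb N :=
  [:: (1, a ++ (i, j) :: (k, l) :: b);
      (-1, a ++ (k, l) :: (i, j) :: b);
      (- (j == k)%:R, a ++ (i, l) :: b);
      ((l == i)%:R, a ++ (k, j) :: b)].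

Definition zero_in_Ugl N (x : fcomb N) : Prop :=
  exists s : seq (algC * (word N * word N) * ('I_N * 'I_N * 'I_N * 'I_N)),
    forall u : word N,
      coef x u =
      coef (flatten [seq scale_comb r.1.1
                        (rel_elem r.1.2.1 r.1.2.2 r.2.1.1.1 r.2.1.1.2 r.2.1.2 r.2.2)
                    | r <- s]) u.

(** * The gl(N)-weight system on permutations (points 1..m are 'I_m, 0-based):
    w(alpha) = sum_{i_1..i_m} E_{i_1 i_alpha(1)} ... E_{i_m i_alpha(m)}. *)
Definition wgl N m (alpha : 'S_m) : fcomb N :=
  [seq (1, [seq (i k, i (alpha k)) | k <- enum 'I_m]) | i : {ffun 'I_m -> 'I_N} <- enum {ffun 'I_m -> 'I_N}].

(* C-linear extension: the value on a difference alpha - beta. *)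
Definition wgl_diff N m (alpha beta : 'S_m) : fcomb N :=
  wgl N alpha ++ scale_comb (-1) (wgl N beta).

(** Old points are 'I_n (n = m-1), gamma : 'S_n, q : option 'I_n (None encodes the symbol star).
    For t : 'I_n.+1 (t in {0..n}) the new point x sits at position t of
    'I_n.+1 (i.e. in the gap after t old points), and old point p moves to
    position lift t p (= p if p < t, p+1 otherwise). *)
Definition alpha_fun n (gamma : 'S_n) (q : option 'I_n) (t : 'I_n.+1)
    (y : 'I_n.+1) : 'I_n.+1 :=
  match unlift t y with
  | None =>
      match q with None => t | Some q0 => lift t (gamma q0) end
  | Some p =>
      if q == Some p then t else lift t (gamma p)
  end.

Lemma alpha_fun_inj n gamma q t : injective (@alpha_fun n gamma q t).
Proof.
have H : forall p, (lift t p == t) = false.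
  by move=> p; apply/negbTE; rewrite eq_sym neq_lift.
have H' : forall p, (t == lift t p) = false by move=> p; rewrite eq_sym H.
move=> y1 y2; rewrite /alpha_fun.
case: unliftP => [p1 ->|->]; case: unliftP => [p2 ->|->] //.
- case: q => [q0|]; last by move/lift_inj/perm_inj->.
  case: (eqVneq (Some q0) (Some p1)) => [[<-]|n1];
    case: (eqVneq (Some q0) (Some p2)) => [[<-]|n2] //;
    try by move/eqP; rewrite ?H ?H'.
  by move/lift_inj/perm_inj->.
- case: q => [q0|]; last by move/eqP; rewrite ?H ?H'.
  case: (eqVneq (Some q0) (Some p1)) => [[<-]|n1]; first by move/eqP; rewrite H'.
  by move/lift_inj/perm_inj=> E; rewrite E eqxx in n1.
- case: q => [q0|]; last by move/eqP; rewrite ?H ?H'.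
  case: (eqVneq (Some q0) (Some p2)) => [[<-]|n2]; first by move/eqP; rewrite H.
  by move/lift_inj/perm_inj=> E; rewrite E eqxx in n2.
Qed.

Definition alpha n (gamma : 'S_n) (q : option 'I_n) (t : 'I_n.+1) : 'S_n.+1 :=
  perm (@alpha_fun_inj n gamma q t).

(* E(gamma, q, v) = sum_{j in v} (alpha_{j-1} - alpha_j); in 0-based terms the
   old point p (= j-1) contributes alpha_p - alpha_(p+1). *)
Definition vass_elem N n (gamma : 'S_n) (q : option 'I_n) (v : {set 'I_n}) : fcomb N :=
  flatten [seq wgl_diff N (alpha gamma q (inord p)) (alpha gamma q (inord p.+1))
          | p : 'I_n <- enum v].

(* Main.v *)
Require Import Defs.
From mathcomp Require Import all_boot all_order all_algebra all_fingroup all_field.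
From mathcomp Require Import ring zify.
Set Implicit Arguments. Unset Strict Implicit. Unset Printing Implicit Defensive.
Import GRing.Theory.
Local Open Scope ring_scope.

Lemma coef_cat N (x y : fcomb N) u : coef (x ++ y) u = coef x u + coef y u.
Proof. by rewrite /coef big_cat. Qed.
Lemma coef_scale N c (x : fcomb N) u : coef (scale_comb c x) u = c * coef x u.
Proof.
rewrite /coef big_map mulr_sumr; apply: eq_bigr => p _ /=.
by case: ifP; rewrite ?mulr0.
Qed.
Lemma coef_flatten N (l : seq (fcomb N)) u :
  coef (flatten l) u = \sum_(x <- l) coef x u.
Proof. by rewrite /coef big_flatten. Qed.
Lemma coef_wgl0 N m (a : 'S_m) u : coef (wgl N a) u =
  \sum_(i : {ffun 'I_m -> 'I_N}) ([seq (i k, i (a k)) | k <- enum 'I_m] == u)%:R.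
Proof.
rewrite /coef /wgl big_map big_enum /=; apply: eq_bigr => i _.
by case: eqP.
Qed.
Lemma iteR (b : bool) (c : algC) : (if b then c else 0) = b%:R * c.
Proof. by case: b; rewrite ?mul1r ?mul0r. Qed.

Lemma coef_rel N (a b : word N) i j k l u :
  coef (rel_elem a b i j k l) u =
  (a ++ (i, j) :: (k, l) :: b == u)%:R - (a ++ (k, l) :: (i, j) :: b == u)%:R
  - (j == k)%:R * (a ++ (i, l) :: b == u)%:R + (l == i)%:R * (a ++ (k, j) :: b == u)%:R.
Proof.
rewrite /coef /rel_elem !big_cons big_nil /=.
by rewrite !iteR; ring.
Qed.

Definition sig n (g : 'S_n) (q : option 'I_n) (z : option 'I_n) : option 'I_n :=
  match z with None => omap g q | Some r => if q == Some r then None else Some (g r) end.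

Lemma sig_inj n (g : 'S_n) q : injective (sig g q).
Proof.
move=> [r1|] [r2|] //=.
- case: (eqVneq q (Some r1)) => [->|h1]; case: (eqVneq (Some r1) (Some r2)) => [->//|h12];
    case: (eqVneq q (Some r2)) => [E|h2] //.
  by move=> [] /perm_inj ->.
- case: q => [q0|] //=; case: eqP => // /eqP; rewrite eq_sym => h [] /perm_inj E.
  by rewrite E eqxx in h.
- case: q => [q0|] //=; case: eqP => // /eqP; rewrite eq_sym => h [] /perm_inj E.
  by rewrite E eqxx in h.
Qed.

Lemma unlift_alpha n (g : 'S_n) q (t k : 'I_n.+1) :
  unlift t (alpha g q t k) = sig g q (unlift t k).
Proof.
rewrite /alpha permE /alpha_fun.
case: (unliftP t k) => [p _|_] /=.
  by case: ifP => _; rewrite ?unlift_none ?liftK.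
by case: q => [q0|]; rewrite ?unlift_none ?liftK.
Qed.

Arguments sig : simpl never.

Definition pos n (t : 'I_n.+1) (z : option 'I_n) : 'I_n.+1 :=
  if z is Some r then lift t r else t.

Lemma coef_wgl N n (g : 'S_n) q (t : 'I_n.+1) u :
  coef (wgl N (alpha g q t)) u =
  \sum_(I : {ffun option 'I_n -> 'I_N})
     ([seq (I z, I (sig g q z)) | z <- [seq unlift t k | k <- enum 'I_n.+1]] == u)%:R.
Proof.
rewrite coef_wgl0.
pose h (I : {ffun option 'I_n -> 'I_N}) : {ffun 'I_n.+1 -> 'I_N} :=
  [ffun k => I (unlift t k)].
pose hi (i : {ffun 'I_n.+1 -> 'I_N}) : {ffun option 'I_n -> 'I_N} :=
  [ffun z => i (pos t z)].
rewrite (reindex h) /=; last first.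
  apply: onW_bij; exists hi => [I|i]; apply/ffunP.
    by case=> [r|]; rewrite !ffunE /= ?liftK ?unlift_none.
  by move=> k; rewrite !ffunE; case: (unliftP t k) => [p ->|->] /=; rewrite ?liftK ?unlift_none.
apply: eq_bigr => I _; congr (_ %:R); congr (_ == u).
rewrite -map_comp; apply: eq_map => k /=.
by rewrite !ffunE unlift_alpha.
Qed.

Lemma omap_val_inj n : injective (omap (@nat_of_ord n)).
Proof. by move=> [a|] [b|] //= [] /val_inj ->. Qed.

Lemma ord_split n (t : 'I_n.+1) :
  [seq unlift t k | k <- enum 'I_n.+1] =
  take t [seq Some r | r <- enum 'I_n] ++ None :: drop t [seq Some r | r <- enum 'I_n].
Proof.
apply: (@inj_map _ _ _ (@omap_val_inj n)).
pose G (m : nat) : option nat :=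
  if m == t then None else Some (if (m < t)%N then m else m.-1).
have HG : forall k : 'I_n.+1, omap val (unlift t k) = G k.
  move=> k; case: (unliftP t k) => [j ->|->]; rewrite /G ?eqxx //=.
    rewrite /bump; case: (leqP t j) => h /=.
      by rewrite add1n (gtn_eqF (h : (t < j.+1)%N)) ltnNge (leqW h).
  by rewrite add0n (ltn_eqF h) h.
have Ht : (t <= n)%N by rewrite -ltnS.
rewrite -map_comp (eq_map HG) map_cat /= map_take map_drop -map_comp.
have -> : [seq (omap val \o Some) i | i <- enum 'I_n] = [seq Some i | i <- iota 0 n].
  by rewrite -val_enum_ord -map_comp.
rewrite -map_take -map_drop take_iota drop_iota (minn_idPl Ht) add0n.
rewrite (map_comp G val) val_enum_ord.
have -> : iota 0 n.+1 = iota 0 t ++ (t : nat) :: iota t.+1 (n - t).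
  by rewrite -[in LHS](subnKC Ht) -addnS iotaD.
rewrite map_cat /= /G eqxx; congr (_ ++ _ :: _).
  apply/eq_in_map => k; rewrite mem_iota add0n => /andP[_ h].
  by rewrite (ltn_eqF h) h.
have -> : iota t.+1 (n - t) = [seq (1 + i)%N | i <- iota t (n - t)] by exact: (iotaDl 1 t (n - t)).
rewrite -map_comp; apply/eq_in_map => k; rewrite mem_iota => /andP[h _] /=.
by rewrite add1n (gtn_eqF (h : (t < k.+1)%N)) ltnNge (leqW h).
Qed.


Definition Sq n := [seq Some r | r <- enum 'I_n].

Lemma size_Sq n : size (Sq n) = n.
Proof. by rewrite size_map size_enum_ord. Qed.

Lemma nthS n (p : 'I_n) : nth None (Sq n) p = Some p.
Proof.
rewrite (nth_map p) ?size_enum_ord //; congr Some; apply: val_inj.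
by rewrite /= nth_enum_ord.
Qed.

Lemma ord_p n (p : 'I_n) :
  [seq unlift (inord p) k | k <- enum 'I_n.+1] =
  take p (Sq n) ++ None :: Some p :: drop p.+1 (Sq n).
Proof.
rewrite ord_split inordK; last exact: leqW (ltn_ord p).
by rewrite (drop_nth None) ?size_Sq // nthS.
Qed.

Lemma ord_p1 n (p : 'I_n) :
  [seq unlift (inord p.+1) k | k <- enum 'I_n.+1] =
  take p (Sq n) ++ Some p :: None :: drop p.+1 (Sq n).
Proof.
rewrite ord_split inordK; last by rewrite ltnS.
by rewrite (take_nth None) ?size_Sq // nthS cat_rcons.
Qed.

Lemma merge n (T : Type) (p : 'I_n) (c : T) (f : option 'I_n -> T) :
  map f (take p (Sq n)) ++ c :: map f (drop p.+1 (Sq n)) =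
  map (fun z => if z == Some p then c else f z) (Sq n).
Proof.
have E : Sq n = take p (Sq n) ++ Some p :: drop p.+1 (Sq n).
  by rewrite -{1}(cat_take_drop p (Sq n)) (drop_nth None) ?size_Sq // nthS.
have U : uniq (Sq n) by rewrite map_inj_uniq ?enum_uniq // => a b [].
rewrite {3}E map_cat /= eqxx; move: U; rewrite {1}E cat_uniq /= => /and4P[_ H1 H2 _].
congr (_ ++ _ :: _); apply/eq_in_map => z Hz; case: eqP => // E'; subst z.
  by move: H1; rewrite negb_or Hz.
by rewrite Hz in H2.
Qed.

Definition fw N n (g : 'S_n) q (I : {ffun option 'I_n -> 'I_N}) (z : option 'I_n) :=
  (I z, I (sig g q z)).

Definition Aterm N n (g : 'S_n) q (u : word N) (p : 'I_n) (I : {ffun option 'I_n -> 'I_N}) : algC :=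
  (I (sig g q None) == I (Some p))%:R *
  ([seq (if z == Some p then (I None, I (sig g q (Some p))) else fw g q I z) | z <- Sq n] == u)%:R.

Definition Bterm N n (g : 'S_n) q (u : word N) (p : 'I_n) (I : {ffun option 'I_n -> 'I_N}) : algC :=
  (I (sig g q (Some p)) == I None)%:R *
  ([seq (if z == Some p then (I (Some p), I (sig g q None)) else fw g q I z) | z <- Sq n] == u)%:R.

Definition relp N n (g : 'S_n) q (p : 'I_n) (I : {ffun option 'I_n -> 'I_N}) :=
  (1 : algC, (map (fw g q I) (take p (Sq n)), map (fw g q I) (drop p.+1 (Sq n))),
   (I None, I (sig g q None), I (Some p), I (sig g q (Some p)))).

Lemma relp_coef N n (g : 'S_n) q (p : 'I_n) u :
  \sum_(I <- enum {ffun option 'I_n -> 'I_N})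
    (let r := relp g q p I in
     coef (scale_comb r.1.1 (rel_elem r.1.2.1 r.1.2.2 r.2.1.1.1 r.2.1.1.2 r.2.1.2 r.2.2)) u)
  = (coef (wgl N (alpha g q (inord p))) u - coef (wgl N (alpha g q (inord p.+1))) u)
    - \sum_I Aterm g q u p I + \sum_I Bterm g q u p I.
Proof.
rewrite big_enum coef_wgl coef_wgl ord_p ord_p1.
rewrite -!sumrB -big_split; apply: eq_bigr => I _.
cbv zeta; rewrite /relp coef_scale mul1r coef_rel /Aterm /Bterm -!merge !map_cat.
by [].
Qed.

Lemma sig_Some_ne n (g : 'S_n) q (p r : 'I_n) : q != Some p ->
  (sig g q (Some r) == Some (g p)) = (r == p).
Proof.
move=> hq; have E : sig g q (Some p) = Some (g p) by rewrite /sig (negbTE hq).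
by rewrite -E (inj_eq (@sig_inj n g q)).
Qed.

Lemma sig_None_ne n (g : 'S_n) q (p : 'I_n) : q != Some p ->
  (sig g q None == Some (g p)) = false.
Proof.
move=> hq; have E : sig g q (Some p) = Some (g p) by rewrite /sig (negbTE hq).
by rewrite -E (inj_eq (@sig_inj n g q)).
Qed.

Lemma caseB N n (g : 'S_n) (p : 'I_n) (u : word N) :
  \sum_I Aterm g (Some p) u (g p) I = \sum_I Bterm g (Some p) u p I.
Proof.
pose h (I : {ffun option 'I_n -> 'I_N}) : {ffun option 'I_n -> 'I_N} :=
  [ffun z => I (tperm None (Some (g p)) z)].
have hK : involutive h by move=> I; apply/ffunP => z; rewrite !ffunE tpermK.
rewrite [RHS](reindex_inj (inv_inj hK)); apply: eq_bigr => I _.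
rewrite /Aterm /Bterm /sig /= !ffunE !eqxx; congr (_ * (_ == u)%:R).
apply/eq_in_map => z /mapP [r _ ->] {z}.
rewrite /fw /sig /= !ffunE.
case: (eqVneq r p) => [->{r}|rp].
  case: (eqVneq p (g p)) => [E|ne].
    by rewrite -E !eqxx tpermR.
  have ne' : Some (g p) != Some p by rewrite (inj_eq (@Some_inj _)) eq_sym.
  by rewrite (inj_eq (@Some_inj _)) (negbTE ne) !eqxx tpermR tpermD.
have gne : Some (g p) != Some (g r).
  by rewrite (inj_eq (@Some_inj _)) (inj_eq (@perm_inj _ g)) eq_sym.
have pr : (p == r) = false by rewrite eq_sym (negbTE rp).
rewrite !(inj_eq (@Some_inj _)) (negbTE rp) pr.
rewrite [X in _ = (_, I X)]tpermD //.
case: (eqVneq r (g p)) => [E|ne].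
  rewrite E tpermR; rewrite E in rp.
  by rewrite eq_sym (negbTE rp).
by rewrite tpermD // (inj_eq (@Some_inj _)) eq_sym.
Qed.

Lemma caseA N n (g : 'S_n) q (p : 'I_n) (u : word N) : q != Some p ->
  \sum_I Aterm g q u (g p) I = \sum_I Bterm g q u p I.
Proof.
move=> hq.
have sp : sig g q (Some p) = Some (g p) by rewrite /sig (negbTE hq).
have hne := sig_None_ne g hq.
pose h (I : {ffun option 'I_n -> 'I_N}) : {ffun option 'I_n -> 'I_N} :=
  [ffun z => if z == Some (g p) then I None else I z].
pose C1 := [set I : {ffun option 'I_n -> 'I_N} | I (sig g q None) == I (Some (g p))].
pose C2 := [set J : {ffun option 'I_n -> 'I_N} | J (Some (g p)) == J None].
pose W2 (J : {ffun option 'I_n -> 'I_N}) : algC :=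
  ([seq (if z == Some p then (J (Some p), J (sig g q None)) else fw g q J z) | z <- Sq n] == u)%:R.
transitivity (\sum_(I in C1) W2 (h I)).
  rewrite [RHS]big_mkcond; apply: eq_bigr => I _; rewrite inE /Aterm.
  case: eqP => HI; last by rewrite mul0r.
  rewrite mul1r /W2; congr (_ == u)%:R.
  apply/eq_in_map => z /mapP [r _ ->] {z}.
  rewrite /fw !ffunE hne.
  case: (eqVneq r p) => [->{r}|rp].
    rewrite eqxx HI; case: (eqVneq p (g p)) => [E|ne].
      by rewrite -E eqxx sp -E.
    by rewrite !(inj_eq (@Some_inj _)) (negbTE ne) sp.
  rewrite !(inj_eq (@Some_inj _)) (negbTE rp) (sig_Some_ne g r hq) (negbTE rp).
  by case: (eqVneq r (g p)) => [->|ne]; rewrite ?eqxx.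
rewrite -big_imset /=; last first.
  move=> I1 I2; rewrite !inE => /eqP H1 /eqP H2 Eh; apply/ffunP => z.
  case: (eqVneq z (Some (g p))) => [->|nz].
    rewrite -H1 -H2 (_ : I1 (sig g q None) = h I1 (sig g q None)); last by rewrite ffunE hne.
    by rewrite Eh ffunE hne.
  by have := congr1 (fun f : {ffun option 'I_n -> 'I_N} => f z) Eh; rewrite !ffunE (negbTE nz).
have -> : [set h x | x in C1] = C2.
  apply/setP => J; rewrite inE; apply/imsetP/eqP.
    by move=> [I _ ->]; rewrite !ffunE eqxx.
  move=> HJ; exists [ffun z => if z == Some (g p) then J (sig g q None) else J z].
    by rewrite inE !ffunE hne eqxx.
  apply/ffunP => z; rewrite !ffunE; case: eqP => [->|//]; by rewrite HJ.
rewrite big_mkcond; apply: eq_bigr => J _; rewrite inE /Bterm sp.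
by case: eqP => _; rewrite ?mul1r ?mul0r.
Qed.

Lemma orbit_reindex n (g : 'S_n) (v : {set 'I_n}) (F : 'I_n -> algC) :
  v \in porbits g -> \sum_(p in v) F p = \sum_(p in v) F (g p).
Proof.
case/imsetP => y _ ->.
rewrite (reindex_inj (@perm_inj _ g)); apply: eq_bigl => p.
have E := porbit_perm g 1 p; rewrite expg1 in E.
by rewrite -!eq_porbit_mem E.
Qed.

Theorem theorem3 (N : nat) (hN : (0 < N)%N) (n : nat) (hn : (0 < n)%N)
    (gamma : 'S_n) (q : option 'I_n) (v : {set 'I_n}) :
  v \in porbits gamma -> zero_in_Ugl (vass_elem N gamma q v).
Proof.
move=> hv.
exists (flatten [seq [seq relp gamma q p J | J <- enum {ffun option 'I_n -> 'I_N}]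
                | p <- enum v]) => u.
rewrite /vass_elem coef_flatten big_map coef_flatten big_map big_flatten /= big_map.
transitivity (\sum_(p <- enum v)
   ((coef (wgl N (alpha gamma q (inord p))) u - coef (wgl N (alpha gamma q (inord p.+1))) u)
    - \sum_J Aterm gamma q u p J + \sum_J Bterm gamma q u p J)); last first.
  apply: eq_bigr => p _; rewrite big_map; symmetry; exact: relp_coef.
rewrite big_split /= sumrB.
have -> : \sum_(p <- enum v) \sum_J Aterm gamma q u p J =
          \sum_(p <- enum v) \sum_J Bterm gamma q u p J.
  rewrite !big_enum /= (orbit_reindex (fun p => \sum_J Aterm gamma q u p J) hv).
  apply: eq_bigr => p _.
  case: (eqVneq q (Some p)) => [->|hq]; first exact: caseB.
  exact: caseA.
rewrite subrK; apply: eq_bigr => p _.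
by rewrite /wgl_diff coef_cat coef_scale mulN1r.
Qed.
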